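(* Let $w=w(x_1,\dots,x_n)$ be a multilinear commutator word. Assume that $T$ is a normal subgroup of a group $G$ and $a_1,\dots,a_n$ are elements of $G$ such that every element of the form $w(y_1,\dots,y_n)$ with $y_i\in a_iT$ for all $i$ has at most $m$ conjugates in $G$. Then every $w$-value of $T$ (i.e. every $w(t_1,\dots,t_n)$ with $t_i\in T$) has at most $m^{2^n}$ conjugates in $G$.
   Context: Multilinear commutator words are defined recursively: $x$ is a multilinear commutator, and if $u,v$ are multilinear commutators in disjoint sets of variables then $[u,v]$ is one. *)

(* Defs.v *)
From Stdlib Require Import List Arith Permutation.
Import ListNotations.

Record Group := {
  carrier :> Type;
  gmul : carrier -> carrier -> carrier;
  gone : carrier;
  ginv : carrier -> carrier;
  gmul_assoc : forall x y z, gmul x (gmul y z) = gmul (gmul x y) z;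
  gmul_1l : forall x, gmul gone x = x;
  gmul_Vl : forall x, gmul (ginv x) x = gone
}.

Arguments gmul {g}.
Arguments gone {g}.
Arguments ginv {g}.

Definition conjg {G : Group} (x g : G) : G := gmul (ginv g) (gmul x g).

Definition commg {G : Group} (x y : G) : G :=
  gmul (ginv x) (gmul (ginv y) (gmul x y)).

Definition normal_subgroup {G : Group} (T : G -> Prop) : Prop :=
  T gone /\
  (forall x y, T x -> T y -> T (gmul x y)) /\
  (forall x, T x -> T (ginv x)) /\
  (forall x g, T x -> T (conjg x g)).

Definition at_most_conjugates {G : Group} (m : nat) (x : G) : Prop :=
  exists s : list G, length s <= m /\ forall g : G, In (conjg x g) s.

Inductive cword : Type :=
| Var : nat -> cword
| Comm : cword -> cword -> cword.

Fixpoint vars (w : cword) : list nat :=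
  match w with
  | Var i => [i]
  | Comm u v => vars u ++ vars v
  end.

Fixpoint eval_word {G : Group} (w : cword) (y : nat -> G) : G :=
  match w with
  | Var i => y i
  | Comm u v => commg (eval_word u y) (eval_word v y)
  end.

(* w is a multilinear commutator word in exactly the variables x_0,...,x_{n-1}:
   each variable occurs exactly once (so the two sides of every bracket involve
   disjoint sets of variables). *)
Definition multilinear_in (w : cword) (n : nat) : Prop :=
  Permutation (vars w) (seq 0 n).

(* Main.v *)
Require Import Defs.
From Stdlib Require Import List Arith Permutation Lia.
Import ListNotations.

Section GroupFacts.
Variable G : Group.
Local Notation "x ** y" := (@gmul G x y) (at level 40, left associativity).

Lemma g_mulV (x : G) : x ** ginv x = gone.
Proof.
  rewrite <- (gmul_1l G (x ** ginv x)).
  rewrite <- (gmul_Vl G (ginv x)) at 1.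
  rewrite <- gmul_assoc. rewrite (gmul_assoc G (ginv x)), gmul_Vl, gmul_1l.
  apply gmul_Vl.
Qed.

Lemma g_mul1r (x : G) : x ** gone = x.
Proof. rewrite <- (gmul_Vl G x), gmul_assoc, g_mulV, gmul_1l. reflexivity. Qed.

Lemma g_mulK (x z : G) : ginv x ** (x ** z) = z.
Proof. rewrite gmul_assoc, gmul_Vl, gmul_1l. reflexivity. Qed.

Lemma g_mulKV (x z : G) : x ** (ginv x ** z) = z.
Proof. rewrite gmul_assoc, g_mulV, gmul_1l. reflexivity. Qed.

Lemma g_inv_uniq (x y : G) : x ** y = gone -> ginv x = y.
Proof.
  intro H. rewrite <- (g_mul1r (ginv x)), <- H, g_mulK. reflexivity.
Qed.

Lemma g_inv_mul (x y : G) : ginv (x ** y) = ginv y ** ginv x.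
Proof.
  apply g_inv_uniq. rewrite <- gmul_assoc, (gmul_assoc G y), g_mulV, gmul_1l.
  apply g_mulV.
Qed.

Lemma g_inv_inv (x : G) : ginv (ginv x) = x.
Proof. apply g_inv_uniq. apply gmul_Vl. Qed.

Lemma g_inv_one : ginv (@gone G) = gone.
Proof. apply g_inv_uniq. apply gmul_1l. Qed.

End GroupFacts.

Ltac gsimpl :=
  unfold conjg, commg in *;
  repeat (rewrite <- gmul_assoc || rewrite g_inv_mul || rewrite g_inv_inv
          || rewrite g_inv_one || rewrite gmul_1l || rewrite g_mul1r
          || rewrite g_mulK || rewrite g_mulKV || rewrite g_mulV
          || rewrite gmul_Vl).

Lemma nodup_app_dis (A : Type) (l1 l2 : list A) (x : A) :
  NoDup (l1 ++ l2) -> In x l1 -> In x l2 -> False.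
Proof.
  induction l1; simpl; intros Hn H1 H2; [destruct H1|].
  inversion Hn; subst. destruct H1 as [<-|H1].
  - apply H3, in_or_app; auto.
  - eauto.
Qed.

Section Main.
Variable G : Group.
Local Notation "x ** y" := (@gmul G x y) (at level 40, left associativity).

Lemma amc_conj (M : nat) (x g : G) : at_most_conjugates M x -> at_most_conjugates M (conjg x g).
Proof.
  intros [s [Hl Hs]]. exists s. split; auto. intro h.
  replace (conjg (conjg x g) h) with (conjg x (g ** h)) by (gsimpl; reflexivity).
  apply Hs.
Qed.

Lemma amc_inv (M : nat) (x : G) : at_most_conjugates M x -> at_most_conjugates M (ginv x).
Proof.
  intros [s [Hl Hs]]. exists (map ginv s). split.
  - rewrite length_map; auto.
  - intro h. replace (conjg (ginv x) h) with (ginv (conjg x h)) by (gsimpl; reflexivity).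
    apply in_map, Hs.
Qed.

Lemma amc_mul (M N : nat) (x y : G) : at_most_conjugates M x -> at_most_conjugates N y ->
  at_most_conjugates (M * N) (x ** y).
Proof.
  intros [s [Hl Hs]] [s' [Hl' Hs']].
  exists (map (fun p => fst p ** snd p) (list_prod s s')). split.
  - rewrite length_map, length_prod. apply Nat.mul_le_mono; auto.
  - intro h. replace (conjg (x ** y) h) with (conjg x h ** conjg y h) by (gsimpl; reflexivity).
    apply (in_map (fun p => fst p ** snd p) _ (conjg x h, conjg y h)).
    apply in_prod; auto.
Qed.

Lemma eval_ext (w : cword) (y z : nat -> G) :
  (forall i, In i (vars w) -> y i = z i) -> eval_word w y = eval_word w z.
Proof.
  induction w; simpl; intro H.
  - apply H; auto.
  - rewrite IHw1, IHw2; auto; intros i Hi; apply H; apply in_or_app; auto.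
Qed.

Lemma eval_conj (w : cword) (y : nat -> G) (g : G) :
  eval_word w (fun i => conjg (y i) g) = conjg (eval_word w y) g.
Proof.
  induction w; simpl; auto.
  rewrite IHw1, IHw2. gsimpl. reflexivity.
Qed.

Variable T : G -> Prop.
Hypothesis HT : normal_subgroup T.

Lemma T_mul x y : T x -> T y -> T (x ** y).
Proof. destruct HT as [_ [H _]]; auto. Qed.
Lemma T_inv x : T x -> T (ginv x).
Proof. destruct HT as [_ [_ [H _]]]; auto. Qed.
Lemma T_conj x g : T x -> T (conjg x g).
Proof. destruct HT as [_ [_ [_ H]]]; auto. Qed.

Lemma eval_in_T (w : cword) (y : nat -> G) (j : nat) :
  In j (vars w) -> T (y j) -> T (eval_word w y).
Proof.
  induction w; simpl; intros Hj Ht.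
  - destruct Hj as [<-|[]]; auto.
  - apply in_app_or in Hj. destruct Hj as [Hj|Hj].
    + specialize (IHw1 Hj Ht).
      replace (commg (eval_word w1 y) (eval_word w2 y)) with
        (ginv (eval_word w1 y) ** conjg (eval_word w1 y) (eval_word w2 y)) by (gsimpl; reflexivity).
      apply T_mul; [apply T_inv | apply T_conj]; auto.
    + specialize (IHw2 Hj Ht).
      replace (commg (eval_word w1 y) (eval_word w2 y)) with
        (conjg (ginv (eval_word w2 y)) (eval_word w1 y) ** eval_word w2 y) by (gsimpl; reflexivity).
      apply T_mul; [apply T_conj; apply T_inv|]; auto.
Qed.

Variable P : nat -> G -> Prop.
Hypothesis HP : forall i x g, T g -> P i x -> P i (conjg x g).
Variable j : nat.
Variable a : G.
Hypothesis Pa : P j a.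

Definition upd (y : nat -> G) (x : G) : nat -> G := fun i => if Nat.eq_dec i j then x else y i.

Lemma decomp (w : cword) : NoDup (vars w) -> In j (vars w) ->
  forall y : nat -> G, (forall i, i <> j -> P i (y i)) -> T (y j) ->
  exists z : nat -> G, (forall i, P i (z i)) /\
    eval_word w (upd y (a ** y j)) = eval_word w z ** eval_word w y.
Proof.
  induction w as [k|w1 IH1 w2 IH2]; simpl; intros Hnd Hj y Hy Ht.
  - destruct Hj as [Hk|[]]. subst k. exists (upd y a). split.
    + intro i. unfold upd. destruct (Nat.eq_dec i j); subst; auto.
    + unfold upd. destruct (Nat.eq_dec j j) as [_|]; [reflexivity|congruence].
  - apply NoDup_app_remove_r in Hnd as Hnd1. apply NoDup_app_remove_l in Hnd as Hnd2.
    assert (Hdis : forall i, In i (vars w1) -> ~ In i (vars w2)).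
    { intros i H1 H2. eapply nodup_app_dis; eauto. }
    apply in_app_or in Hj. destruct Hj as [Hj|Hj].
    + destruct (IH1 Hnd1 Hj y Hy Ht) as [z [Hz Heq]].
      assert (E2 : eval_word w2 (upd y (a ** y j)) = eval_word w2 y).
      { apply eval_ext. intros i Hi. unfold upd. destruct (Nat.eq_dec i j); subst; auto.
        exfalso; apply (Hdis j); auto. }
      set (R := eval_word w1 y).
      set (Z := fun i => if in_dec Nat.eq_dec i (vars w1) then z i else y i).
      exists (fun i => conjg (Z i) R). split.
      * intro i. apply HP. { apply (eval_in_T w1 y j); auto. }
        unfold Z. destruct (in_dec Nat.eq_dec i (vars w1)); auto.
        apply Hy. intro; subst; auto.
      * simpl. rewrite !eval_conj.
        assert (Z1 : eval_word w1 Z = eval_word w1 z).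
        { apply eval_ext. intros i Hi. unfold Z. destruct (in_dec Nat.eq_dec i (vars w1)); tauto. }
        assert (Z2 : eval_word w2 Z = eval_word w2 y).
        { apply eval_ext. intros i Hi. unfold Z. destruct (in_dec Nat.eq_dec i (vars w1)); auto.
          exfalso; eapply Hdis; eauto. }
        rewrite Z1, Z2, E2, Heq. fold R. gsimpl. reflexivity.
    + destruct (IH2 Hnd2 Hj y Hy Ht) as [z [Hz Heq]].
      assert (E1 : eval_word w1 (upd y (a ** y j)) = eval_word w1 y).
      { apply eval_ext. intros i Hi. unfold upd. destruct (Nat.eq_dec i j); subst; auto.
        exfalso; apply (Hdis j); auto. }
      set (R := eval_word w2 y).
      set (c := eval_word w1 y).
      assert (HR : T R) by (apply (eval_in_T w2 y j); auto).
      set (Z := fun i => if in_dec Nat.eq_dec i (vars w2) then z i else y i).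
      exists (fun i => conjg (Z i) (R ** ginv (commg c R))). split.
      * intro i. apply HP.
        { apply T_mul; auto. apply T_inv.
          replace (commg c R) with (conjg (ginv R) c ** R) by (gsimpl; reflexivity).
          apply T_mul; auto. apply T_conj, T_inv; auto. }
        unfold Z. destruct (in_dec Nat.eq_dec i (vars w2)); auto.
        apply Hy. intro; subst; auto.
      * simpl. rewrite !eval_conj.
        assert (Z2 : eval_word w2 Z = eval_word w2 z).
        { apply eval_ext. intros i Hi. unfold Z. destruct (in_dec Nat.eq_dec i (vars w2)); tauto. }
        assert (Z1 : eval_word w1 Z = eval_word w1 y).
        { apply eval_ext. intros i Hi. unfold Z. destruct (in_dec Nat.eq_dec i (vars w2)); auto.
          exfalso; eapply Hdis; eauto. }
        rewrite Z1, Z2, E1, Heq. fold R c. gsimpl. reflexivity.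
Qed.

End Main.

Theorem lemma3p4 (G : Group) (n m : nat) (w : cword)
  (Hw : multilinear_in w n)
  (T : G -> Prop) (HT : normal_subgroup T) (a : nat -> G)
  (Hcoset : forall y : nat -> G,
      (forall i, i < n -> exists t, T t /\ y i = gmul (a i) t) ->
      at_most_conjugates m (eval_word w y)) :
  forall t : nat -> G, (forall i, i < n -> T (t i)) ->
    at_most_conjugates (m ^ (2 ^ n)) (eval_word w t).
Proof.
  intros t Ht.
  assert (Hnd : NoDup (vars w)).
  { eapply Permutation_NoDup; [apply Permutation_sym, Hw | apply seq_NoDup]. }
  assert (Hin : forall k, k < n -> In k (vars w)).
  { intros k Hk. eapply Permutation_in; [apply Permutation_sym, Hw|]. apply in_seq; lia. }
  pose (Q := fun k i x => (i < k -> T x) /\ (k <= i < n -> exists s, T s /\ x = gmul (a i) s)).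
  assert (C : forall k, k <= n -> forall y, (forall i, Q k i (y i)) ->
            at_most_conjugates (m ^ (2 ^ k)) (eval_word w y)).
  { induction k as [|k IHk].
    - intros _ y Hy. rewrite Nat.pow_0_r, Nat.pow_1_r. apply Hcoset.
      intros i Hi. apply (proj2 (Hy i)). lia.
    - intros Hk y Hy.
      assert (Htk : T (y k)) by (apply (proj1 (Hy k)); lia).
      assert (HPQ : forall i x g, T g -> Q k i x -> Q k i (conjg x g)).
      { intros i x g Hg [H1 H2]. split.
        - intro Hi. apply T_conj; auto.
        - intro Hi. destruct (H2 Hi) as [s [Hs ->]].
          exists (gmul (conjg (ginv g) (a i)) (gmul s g)). split.
          + apply T_mul; auto. apply T_conj, T_inv; auto. apply T_mul; auto.
          + gsimpl. reflexivity. }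
      assert (Pa : Q k k (a k)).
      { split; [lia|]. intros _. exists gone. split; [apply HT|]. rewrite g_mul1r; auto. }
      assert (Hy' : forall i, i <> k -> Q k i (y i)).
      { intros i Hik. destruct (Hy i) as [H1 H2]. split; intro; [apply H1 | apply H2]; lia. }
      destruct (decomp G T HT (Q k) HPQ k (a k) Pa w Hnd (Hin k ltac:(lia)) y Hy' Htk)
        as [z [Hz Heq]].
      assert (E : eval_word w y = gmul (ginv (eval_word w z))
                     (eval_word w (upd G k y (gmul (a k) (y k))))).
      { rewrite Heq. gsimpl. reflexivity. }
      rewrite E.
      replace (2 ^ S k) with (2 ^ k + 2 ^ k) by (simpl; lia).
      rewrite Nat.pow_add_r.
      apply amc_mul.
      + apply amc_inv. apply IHk; [lia|]. auto.
      + apply IHk; [lia|]. intro i. unfold upd. destruct (Nat.eq_dec i k).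
        * subst i. split; [lia|]. intros _. exists (y k). auto.
        * auto. }
  apply C; [lia|]. intro i. split; [intro; apply Ht; auto | lia].
Qed.
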